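(* Let $M>0$, $0<a<M$, $\mu>0$, $m\in\mathbb{Z}\setminus\{0\}$, $n\in\{0,1,2,\dots\}$, $l\in\{|m|,|m|+1,\dots\}$, and define $$\alpha_1=\frac{ma}{\mu M^2},\quad \alpha_2=\frac{2n+1}{\mu M}\sqrt{1-\frac{a^2}{M^2}},\quad \alpha=\alpha_1-i\alpha_2,\quad \epsilon=2\sqrt{1-\frac{a^2}{M^2}},\quad \beta=6-\frac{l(l+1)}{\mu^2M^2}.$$ Assume $\beta\geq 0$ and define $$q(z)=z^4+\frac{4z}{\beta+\epsilon}\left[(2+\epsilon)(z^2+1)+\alpha(z^2-1)\right]+2\,\frac{16-\beta+3\epsilon}{\beta+\epsilon}\,z^2+1,\quad z\in\mathbb{C}.$$ Then $q$ has no real roots. In addition, if $\alpha_1\geq 0$ and $0\leq\beta\leq 16+3\epsilon$, then $$\lim_{x\to\infty,\ x\in\mathbb{R}}\arctan\left(\frac{\mathrm{Im}(q(x))}{\mathrm{Re}(q(x))}\right)=0.$$ *)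

(* Defs.v *)
From Stdlib Require Import Reals ZArith.
From Coquelicot Require Import Coquelicot.
Open Scope R_scope.

Definition alpha1 (M a mu : R) (m : Z) : R := IZR m * a / (mu * M ^ 2).
Definition alpha2 (M a mu : R) (n : nat) : R :=
  (2 * INR n + 1) / (mu * M) * sqrt (1 - a ^ 2 / M ^ 2).
Definition alphaC (M a mu : R) (m : Z) (n : nat) : C :=
  (alpha1 M a mu m, - alpha2 M a mu n).
Definition eps (M a : R) : R := 2 * sqrt (1 - a ^ 2 / M ^ 2).
Definition beta (M mu : R) (l : nat) : R :=
  6 - INR l * (INR l + 1) / (mu ^ 2 * M ^ 2).

Definition qpoly (M a mu : R) (m : Z) (n l : nat) (z : C) : C :=
  let e := eps M a in
  let b := beta M mu l in
  let al := alphaC M a mu m n in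
  (z ^ 4 + RtoC (4 / (b + e)) * z *
     (RtoC (2 + e) * (z ^ 2 + 1) + al * (z ^ 2 - 1))
   + RtoC (2 * ((16 - b + 3 * e) / (b + e))) * z ^ 2 + 1)%C.

(* Main.v *)
Require Import Defs.
From Stdlib Require Import Reals ZArith Lra Psatz.
From Coquelicot Require Import Coquelicot.
Open Scope R_scope.

Lemma ratio_lim A B C D :
  is_lim (fun x => D * (x^3 - x) / (x^4 + A * x^3 + B * x^2 + C * x + 1)) p_infty 0.
Proof.
  apply is_lim_spec. intros [e he]. cbn [pos].
  pose (KK := Rabs A + Rabs B + Rabs C).
  exists (2 * KK + 1 + 2 * Rabs D / e). intros x Hx.
  assert (HK : 0 <= KK) by (unfold KK; pose proof (Rabs_pos A); pose proof (Rabs_pos B); pose proof (Rabs_pos C); lra).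
  assert (HDe : 0 <= 2 * Rabs D / e) by (pose proof (Rabs_pos D); unfold Rdiv; apply Rmult_le_pos; [lra| left; apply Rinv_0_lt_compat; lra]).
  assert (x1 : 1 <= x) by lra.
  assert (x2 : 2 * KK <= x) by lra.
  assert (hx3 : 0 < x^3) by (apply pow_lt; lra).
  assert (hx2 : x^2 <= x^3) by (simpl; nra).
  assert (hx1 : x <= x^3) by (simpl; nra).
  assert (hA : - Rabs A * x^3 <= A * x^3) by (pose proof (Rabs_le_between' A A 0); apply Rmult_le_compat_r; [lra| pose proof (Rle_abs (-A)); rewrite Rabs_Ropp in *; lra]).
  assert (hB : - Rabs B * x^3 <= B * x^2).
  { pose proof (Rle_abs (-B)); rewrite Rabs_Ropp in *. pose proof (Rabs_pos B).
    assert (0 <= x^2) by (apply pow_le; lra). nra. }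
  assert (hC : - Rabs C * x^3 <= C * x).
  { pose proof (Rle_abs (-C)); rewrite Rabs_Ropp in *. pose proof (Rabs_pos C). nra. }
  assert (hx4 : x^4 = x * x^3) by ring.
  assert (HP : x^4 / 2 <= x^4 + A * x^3 + B * x^2 + C * x + 1).
  { rewrite hx4. unfold KK in x2. nra. }
  assert (HP0 : 0 < x^4) by (apply pow_lt; lra).
  rewrite Rminus_0_r, Rabs_div by lra.
  rewrite (Rabs_pos_eq (_ + 1)) by lra.
  apply Rlt_div_l; [lra|].
  rewrite Rabs_mult, (Rabs_pos_eq (x^3 - x)) by lra.
  assert (He : 2 * Rabs D < e * x).
  { assert (2 * Rabs D / e < x) by lra. assert (2 * Rabs D = (2 * Rabs D / e) * e) by (field; lra). nra. }
  pose proof (Rabs_pos D).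
  assert (Rabs D * (x^3 - x) <= Rabs D * x^3) by nra.
  assert (e * (x^4/2) <= e * (x^4 + A * x^3 + B * x^2 + C * x + 1)) by nra.
  assert (2 * Rabs D * x^3 < e * x * x^3) by (apply Rmult_lt_compat_r; lra).
  assert (e * x * x^3 = e * x^4) by ring. lra.
Qed.

Lemma q_re M a mu m n l x :
  Re (qpoly M a mu m n l (RtoC x)) =
  x^4 + (4 / (beta M mu l + eps M a)) * (2 + eps M a + alpha1 M a mu m) * x^3
  + 2 * ((16 - beta M mu l + 3 * eps M a) / (beta M mu l + eps M a)) * x^2
  + (4 / (beta M mu l + eps M a)) * (2 + eps M a - alpha1 M a mu m) * x + 1.
Proof. unfold qpoly, alphaC; simpl. ring. Qed.

Lemma q_im M a mu m n l x :
  Im (qpoly M a mu m n l (RtoC x)) =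
  - (4 / (beta M mu l + eps M a)) * alpha2 M a mu n * (x^3 - x).
Proof. unfold qpoly, alphaC; simpl. ring. Qed.

Theorem mainTheorem8 (M a mu : R) (m : Z) (n l : nat)
  (hM : 0 < M) (ha0 : 0 < a) (haM : a < M) (hmu : 0 < mu)
  (hm : m <> 0%Z) (hl : (Z.abs_nat m <= l)%nat)
  (hbeta : 0 <= beta M mu l) :
  (forall x : R, qpoly M a mu m n l (RtoC x) <> RtoC 0) /\
  (0 <= alpha1 M a mu m -> beta M mu l <= 16 + 3 * eps M a ->
   is_lim (fun x : R => atan (Im (qpoly M a mu m n l (RtoC x)) /
                              Re (qpoly M a mu m n l (RtoC x))))
          p_infty 0).
Proof.
  split.
  - intros x Hq.
    assert (Hr : 1 - a ^ 2 / M ^ 2 > 0).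
    { assert (a^2 < M^2) by nra. assert (0 < M^2) by nra.
      assert (a^2 / M^2 < 1) by (apply Rlt_div_l; lra). lra. }
    assert (Hs : 0 < sqrt (1 - a ^ 2 / M ^ 2)) by (apply sqrt_lt_R0; lra).
    assert (He : 0 < eps M a) by (unfold eps; lra).
    assert (Ha2 : 0 < alpha2 M a mu n).
    { unfold alpha2. apply Rmult_lt_0_compat; [|lra].
      pose proof (pos_INR n). apply Rdiv_lt_0_compat; nra. }
    pose proof (f_equal Re Hq) as HRe. pose proof (f_equal Im Hq) as HIm.
    rewrite q_re in HRe. rewrite q_im in HIm. change (Re (RtoC 0)) with 0 in HRe. change (Im (RtoC 0)) with 0 in HIm.
    set (s := beta M mu l + eps M a) in *.
    assert (Hs0 : 0 < s) by (unfold s; lra).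
    assert (Hc : 0 < 4 / s) by (apply Rdiv_lt_0_compat; lra).
    assert (Hx : x * ((x - 1) * (x + 1)) = 0).
    { assert (- (4 / s) * alpha2 M a mu n <> 0) by nra.
      apply (Rmult_eq_reg_l (- (4 / s) * alpha2 M a mu n)); [|assumption].
      rewrite Rmult_0_r, <- HIm. ring. }
    apply Rmult_integral in Hx. destruct Hx as [Hx|Hx];
      [|apply Rmult_integral in Hx; destruct Hx as [Hx|Hx]].
    + subst x. revert HRe. replace (0 ^ 4 + 4 / s * (2 + eps M a + alpha1 M a mu m) * 0 ^ 3 +
        2 * ((16 - beta M mu l + 3 * eps M a) / s) * 0 ^ 2 +
        4 / s * (2 + eps M a - alpha1 M a mu m) * 0 + 1) with 1 by ring. lra.
    + assert (x = 1) by lra. subst x. revert HRe.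
      replace (1 ^ 4 + 4 / s * (2 + eps M a + alpha1 M a mu m) * 1 ^ 3 +
        2 * ((16 - beta M mu l + 3 * eps M a) / s) * 1 ^ 2 +
        4 / s * (2 + eps M a - alpha1 M a mu m) * 1 + 1)
        with ((48 + 16 * eps M a) / s) by (unfold s; field; lra).
      intro HRe. assert (0 < (48 + 16 * eps M a) / s) by (apply Rdiv_lt_0_compat; lra). lra.
    + assert (x = -1) by lra. subst x. revert HRe.
      replace ((-1) ^ 4 + 4 / s * (2 + eps M a + alpha1 M a mu m) * (-1) ^ 3 +
        2 * ((16 - beta M mu l + 3 * eps M a) / s) * (-1) ^ 2 +
        4 / s * (2 + eps M a - alpha1 M a mu m) * (-1) + 1)
        with (16 / s) by (unfold s; field; lra).
      intro HRe. assert (0 < 16 / s) by (apply Rdiv_lt_0_compat; lra). lra.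
  - intros _ _.
    pose (c := 4 / (beta M mu l + eps M a)).
    apply (is_lim_ext (fun x => atan ((- c * alpha2 M a mu n) * (x^3 - x) /
      (x^4 + c * (2 + eps M a + alpha1 M a mu m) * x^3
       + 2 * ((16 - beta M mu l + 3 * eps M a) / (beta M mu l + eps M a)) * x^2
       + c * (2 + eps M a - alpha1 M a mu m) * x + 1)))).
    { intro x. rewrite q_re, q_im. reflexivity. }
    replace (Finite 0) with (Finite (atan 0)) by (rewrite atan_0; reflexivity).
    apply is_lim_comp_continuous; [apply ratio_lim | apply continuous_atan].
Qed.
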